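(* Let $q>1$ be a fixed integer and $c>0$. There exists a constant $C>0$ (depending only on $q$ and $c$) such that for all $n\in\mathbb{N}$ and $p\in(0,1)$ with $np\ge c$ (i.e. $p^{-1}\lesssim n$), a random variable $B\sim\mathrm{Bin}(n,p)$ satisfies $$\mathbb{E}\Big[\mathbb{I}\{B>0\}\Big(\frac1B-\frac1{np}\Big)^q\Big]\le C\,(np)^{-3q/2}.$$ *)

(* Defs.v *)
From HB Require Import structures.
From mathcomp Require Import all_boot all_order all_algebra.
From mathcomp Require Import reals exp.
Set Implicit Arguments. Unset Strict Implicit. Unset Printing Implicit Defensive.
Import Order.TTheory GRing.Theory Num.Theory.
Local Open Scope ring_scope.

Definition binom_expect (R : realType) (n : nat) (p : R) (f : nat -> R) : R :=
  \sum_(k < n.+1) ('C(n, k))%:R * p ^+ k * (1 - p) ^+ (n - k) * f k.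

Definition inv_dev (R : realType) (n : nat) (p : R) (q : nat) (k : nat) : R :=
  if (0 < k)%N then (k%:R^-1 - (n%:R * p)^-1) ^+ q else 0.

(* Main.v *)
Require Import Defs.
From HB Require Import structures.
From mathcomp Require Import all_boot all_order all_algebra.
From mathcomp Require Import reals exp.
From mathcomp Require Import sequences.
From mathcomp Require Import ring lra zify.
Import Order.TTheory GRing.Theory Num.Theory.
Local Open Scope ring_scope.


Section S.
Variable R : realType.
Implicit Types (p : R) (f g : nat -> R).

Lemma E_le n p f g : 0 <= p <= 1 -> (forall k, (k <= n)%N -> f k <= g k) ->
  binom_expect n p f <= binom_expect n p g.
Proof.
move=> /andP[p0 p1] fg; rewrite /binom_expect; apply: ler_sum => k _.
apply: ler_wpM2l; last by apply: fg; rewrite -ltnS.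
by rewrite !mulr_ge0 // ?exprn_ge0 // subr_ge0.
Qed.

Lemma E_ge0 n p f : 0 <= p <= 1 -> (forall k, (k <= n)%N -> 0 <= f k) ->
  0 <= binom_expect n p f.
Proof.
move=> hp hf; have := @E_le n p (fun=> 0) f hp hf.
by rewrite /binom_expect big1 // => k _; rewrite mulr0.
Qed.

Lemma E_scale n p a f : binom_expect n p (fun k => a * f k) = a * binom_expect n p f.
Proof.
rewrite /binom_expect mulr_sumr; apply: eq_bigr => k _; ring.
Qed.

Lemma E_add n p f g : binom_expect n p (fun k => f k + g k) =
  binom_expect n p f + binom_expect n p g.
Proof.
rewrite /binom_expect -big_split; apply: eq_bigr => k _ /=; ring.
Qed.

Lemma E_shift n p f : ((n.+1)%:R * p) * binom_expect n p (fun k => f k / (k.+1)%:R)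
  = binom_expect n.+1 p (fun j => if j is j'.+1 then f j' else 0).
Proof.
rewrite /binom_expect [in RHS]big_ord_recl /= mulr0 add0r mulr_sumr.
apply: eq_bigr => k _ /=.
rewrite /bump /= add1n subSS.
have h : ((n.+1)%:R * ('C(n, k))%:R = (k.+1)%:R * ('C(n.+1, k.+1))%:R :> R).
  by rewrite -!natrM mul_bin_diag.
have hk : (k.+1)%:R != 0 :> R by rewrite pnatr_eq0.
rewrite exprS.
apply: (mulIf hk).
have -> : (n.+1)%:R * p * (('C(n, k))%:R * p ^+ k * (1 - p) ^+ (n - k) * (f k / (k.+1)%:R)) * (k.+1)%:R
   = ((n.+1)%:R * ('C(n, k))%:R) * p * p ^+ k * (1 - p) ^+ (n - k) * f k * ((k.+1)%:R / (k.+1)%:R) by ring.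
rewrite divff // mulr1 h; ring.
Qed.

Lemma E_mgf n p t : binom_expect n p (fun k => expR (t * k%:R)) = (1 - p + p * expR t) ^+ n.
Proof.
rewrite exprDn /binom_expect; apply: eq_bigr => k _.
rewrite mulrC expRM_natr exprMn; rewrite -mulr_natl; ring.
Qed.

End S.


Section S2.
Variable R : realType.
Implicit Types (p : R) (f g h : nat -> R).

Definition Fj (j : nat) h (k : nat) : R := if (0 < k)%N then h k / k%:R ^+ j else 0.

Lemma inv_le2 (x : R) : 1 <= x -> x^-1 <= 2 / (x + 1).
Proof.
move=> x1.
rewrite -[2 / (x + 1)]invf_div lef_pV2 ?posrE; try lra.
Qed.

Lemma ptw1 j h k : (forall k, 0 <= h k) -> Fj j.+1 h k <= 2 * (Fj j h k / (k.+1)%:R).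
Proof.
move=> h0; rewrite /Fj; case: k => [|k] /=; first by rewrite mul0r mulr0.
have -> : h k.+1 / k.+1%:R ^+ j.+1 = (h k.+1 / k.+1%:R^+j) * k.+1%:R^-1.
  by rewrite exprSr invfM mulrA.
have -> : 2 * (h k.+1 / k.+1%:R ^+ j / k.+2%:R) = (h k.+1 / k.+1%:R^+j) * (2 / k.+2%:R).
  by ring.
apply: ler_wpM2l; first by rewrite divr_ge0 // exprn_ge0.
rewrite -[k.+2]addn1 natrD; apply: inv_le2.
by rewrite ler1n.
Qed.

Lemma ptw2 j h i : (forall k, 0 <= h k) ->
  (if i is i'.+1 then Fj j h i' else 0) <= 2 ^+ j * Fj j (fun k => h k.-1) i.
Proof.
move=> h0; rewrite /Fj; case: i => [|i] /=; first by rewrite mulr0.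
case: i => [|i] /=.
  by rewrite mulr_ge0 ?divr_ge0 ?exprn_ge0.
have -> : 2 ^+ j * (h i.+1 / i.+2%:R ^+ j) = h i.+1 * (2 ^+ j / i.+2%:R ^+ j) by ring.
apply: ler_wpM2l => //.
have h2 : 0 < 2 ^+ j :> R by rewrite exprn_gt0.
rewrite -invf_div lef_pV2 ?posrE ?divr_gt0 ?exprn_gt0 ?ltr0n //.
rewrite ler_pdivrMr // -exprMn_comm; last by rewrite /GRing.comm mulrC.
by apply: lerXn2r; rewrite ?nnegrE ?ler0n ?mulr_ge0 // -natrM ler_nat; lia.
Qed.

Lemma Pj j : forall n p h, (forall k, 0 <= h k) -> 0 < p -> p < 1 ->
  (n%:R * p) ^+ j * binom_expect n p (Fj j h) <=
  2 ^+ (j * j) * binom_expect (n + j) p (fun k => h (k - j)%N).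
Proof.
have hp01 p : 0 < p -> p < 1 -> 0 <= p <= 1 by move=> *; apply/andP; split; lra.
elim: j => [|j IH] n p h h0 p0 p1.
  rewrite !expr0 !mul1r addn0; apply: E_le; first exact: hp01.
  by move=> k _; rewrite /Fj subn0; case: ifP; rewrite ?expr0 ?divr1.
have Ege0 m f : (forall k, 0 <= f k) -> 0 <= binom_expect m p f.
  by move=> f0; apply: E_ge0 => //; exact: hp01.
have Fge0 jj hh k : (forall k, 0 <= hh k) -> 0 <= Fj jj hh k.
  by move=> hh0; rewrite /Fj; case: ifP => // _; rewrite divr_ge0 ?exprn_ge0.
have np0 : 0 <= n%:R * p by rewrite mulr_ge0 ?ler0n //; lra.
have n1p : n%:R * p <= n.+1%:R * p by rewrite ler_wpM2r ?ler_nat //; lra.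
apply: (@le_trans _ _ ((n.+1%:R * p) ^+ j.+1 * binom_expect n p (Fj j.+1 h))).
  apply: ler_wpM2r; [exact: Ege0 (fun k => Fge0 _ _ k h0) | apply: lerXn2r; rewrite ?nnegrE // (le_trans np0)].
  by [].
  by [].
apply: (@le_trans _ _ ((n.+1%:R * p) ^+ j.+1 * (2 * binom_expect n p (fun k => Fj j h k / (k.+1)%:R)))).
  apply: ler_wpM2l; first by rewrite exprn_ge0 // (le_trans np0).
  rewrite -E_scale; apply: E_le; first exact: hp01.
  by move=> k _; apply: ptw1.
rewrite exprSr -mulrA mulrCA (mulrCA (n.+1%:R * p)) (mulrCA (n.+1%:R * p)) E_shift mulrCA.
set h' := fun k => h k.-1.
apply: (@le_trans _ _ (2 * ((n.+1%:R * p) ^+ j * (2 ^+ j * binom_expect n.+1 p (Fj j h'))))).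
  apply: ler_wpM2l => //; apply: ler_wpM2l; first by rewrite exprn_ge0 // (le_trans np0).
  rewrite -E_scale; apply: E_le; first exact: hp01.
  by move=> k _; apply: ptw2.
have := IH n.+1 p h' (fun k => h0 _) p0 p1.
rewrite addSnnS => HI.
have -> : binom_expect (n + j.+1) p (fun k => h (k - j.+1)%N) =
          binom_expect (n + j.+1) p (fun k => h' (k - j)%N).
  by rewrite /binom_expect; apply: eq_bigr => k _; rewrite /h' subnS.
rewrite (mulrCA _ (2 ^+ j)) [2 * (2 ^+ j * _)]mulrA -exprS.
apply: (@le_trans _ _ (2 ^+ j.+1 * (2 ^+ (j * j) * binom_expect (n + j.+1) p (fun k => h' (k - j)%N)))).
  by apply: ler_wpM2l; rewrite ?exprn_ge0.
rewrite mulrA -exprD; apply: ler_wpM2r; first exact: Ege0 (fun k => h0 _).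
by rewrite ler_eXn2l ?ltr1n //; lia.
Qed.

End S2.


Section S3.
Variable R : realType.
Implicit Types (p s x y : R).

Lemma powle (q : nat) y : (0 < q)%N -> 0 <= y -> y ^+ q <= q%:R ^+ q * expR y.
Proof.
move=> q0 y0.
have qn : q%:R != 0 :> R by rewrite pnatr_eq0 -lt0n.
have qp : 0 < q%:R :> R by rewrite ltr0n.
have -> : expR y = expR (y / q%:R) ^+ q by rewrite -expRM_natl mulrC divfK.
rewrite -exprMn_comm; last by rewrite /GRing.comm mulrC.
apply: lerXn2r; rewrite ?nnegrE ?mulr_ge0 ?expR_ge0 ?ler0n //.
rewrite -ler_pdivrMl //.
apply: le_trans (expR_ge1Dx _); rewrite mulrC; lra.
Qed.

Lemma abs_exp x : expR `|x| <= expR x + expR (- x).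
Proof.
have := expR_ge0 x; have := expR_ge0 (-x).
case: (lerP 0 x) => hx.
  rewrite ger0_norm //; lra.
rewrite ltr0_norm //; lra.
Qed.

Lemma mgf_bound (m : nat) p t : 0 <= p <= 1 ->
  (1 - p + p * expR t) ^+ m <= expR (m%:R * p * (expR t - 1)).
Proof.
move=> /andP[p0 p1].
rewrite -mulrA [m%:R * _]mulrC expRM_natr; apply: lerXn2r; rewrite ?nnegrE ?expR_ge0 //.
  by have := expR_ge0 t; nra.
by apply: le_trans (expR_ge1Dx _); lra.
Qed.

Lemma exp_up s : 0 <= s -> s <= 1/2 -> expR s - 1 <= s + 2 * s ^+ 2.
Proof.
move=> s0 s1.
have h := expR_ge1Dx (- s).
have hs : 0 < 1 - s by lra.
have e : expR s * expR (- s) = 1 by rewrite -expRD subrr expR0.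
have eps := expR_gt0 s.
have h2 : expR s * (1 - s) <= 1 by rewrite -e; apply: ler_wpM2l; lra.
nra.
Qed.

Lemma exp_dn s : 0 <= s -> expR (- s) - 1 <= - s + s ^+ 2.
Proof.
move=> s0.
have h := expR_ge1Dx s.
have e : expR s * expR (- s) = 1 by rewrite -expRD subrr expR0.
have eps := expR_gt0 (- s).
have h2 : (1 + s) * expR (- s) <= 1 by rewrite -e; apply: ler_wpM2r; lra.
nra.
Qed.

End S3.


Section S4.
Variable R : realType.
Implicit Types (p s x y : R).

Lemma abs_pow_exp (q : nat) s x : (0 < q)%N -> 0 < s ->
  `|x| ^+ q <= (q%:R / s) ^+ q * (expR (s * x) + expR (- (s * x))).
Proof.
move=> q0 s0.
have sq : 0 < s ^+ q by rewrite exprn_gt0.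
have h := @powle R q (s * `|x|) q0 (mulr_ge0 (ltW s0) (normr_ge0 x)).
have h2 : expR (s * `|x|) <= expR (s * x) + expR (- (s * x)).
  by have := @abs_exp R (s * x); rewrite normrM gtr0_norm.
rewrite expr_div_n mulrAC ler_pdivlMr // mulrC -exprMn_comm; last by rewrite /GRing.comm mulrC.
apply: (le_trans h); apply: ler_wpM2l => //; by rewrite exprn_ge0 ?ler0n.
Qed.

Lemma moment n q p s : (0 < q)%N -> 0 < p -> p < 1 -> 0 < s -> s <= 1/2 ->
  binom_expect (n + q) p (fun k => `|n%:R * p - (k - q)%N%:R| ^+ q) <=
  (q%:R / s) ^+ q * (2 * expR (2 * (n%:R * p) * s ^+ 2 + 2 * q%:R)).
Proof.
move=> q0 p0 p1 s0 s1.
set mu := n%:R * p.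
have hp : 0 <= p <= 1 by apply/andP; split; lra.
have mu0 : 0 <= mu by rewrite mulr_ge0 ?ler0n //; lra.
set A := expR (s * (mu + q%:R)).
set B := expR (- (s * mu)).
apply: (@le_trans _ _ (binom_expect (n + q) p (fun k => (q%:R / s) ^+ q *
   (A * expR (- s * k%:R) + B * expR (s * k%:R))))).
  apply: E_le => // k _.
  have := (@abs_pow_exp q s (mu - (k - q)%N%:R) q0 s0).
  move/le_trans; apply; apply: ler_wpM2l; first by rewrite exprn_ge0 // divr_ge0 ?ler0n //; lra.
  have hk1 : k%:R <= (k - q)%N%:R + q%:R :> R by rewrite -natrD ler_nat; lia.
  have hk2 : (k - q)%N%:R <= k%:R :> R by rewrite ler_nat; lia.
  apply: lerD; rewrite /A /B -expRD ler_expR; nra.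
rewrite E_scale E_add !E_scale !E_mgf.
apply: ler_wpM2l; first by rewrite exprn_ge0 // divr_ge0 ?ler0n //; lra.
have A0 : 0 <= A by exact: expR_ge0.
have B0 : 0 <= B by exact: expR_ge0.
set C := expR (2 * mu * s ^+ 2 + 2 * q%:R).
have m_eq : (n + q)%N%:R * p = mu + q%:R * p by rewrite natrD mulrDl.
have qp : 0 <= q%:R * p <= q%:R by apply/andP; split; [rewrite mulr_ge0 ?ler0n //; lra | rewrite ler_piMr ?ler0n //; lra].
have hA : A * (1 - p + p * expR (- s)) ^+ (n + q) <= C.
  apply: (le_trans (ler_wpM2l A0 (@mgf_bound R (n + q) p (- s) hp))).
  rewrite /A -expRD ler_expR m_eq.
  have e1 := @exp_dn R s (ltW s0).
  have e2 : expR (- s) - 1 <= 0 by rewrite subr_le0 expR_le1; lra.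
  have e3 : (mu + q%:R * p) * (expR (- s) - 1) <= mu * (expR (- s) - 1).
    by move: qp => /andP[qp1 qp2]; nra.
  nra.
have hB : B * (1 - p + p * expR s) ^+ (n + q) <= C.
  apply: (le_trans (ler_wpM2l B0 (@mgf_bound R (n + q) p s hp))).
  rewrite /B -expRD ler_expR m_eq.
  have e1 := @exp_up R s (ltW s0) s1.
  have e2 : 0 <= expR s - 1 by have := expR_ge1Dx s; lra.
  have e3 : (mu + q%:R * p) * (expR s - 1) <= (mu + q%:R) * (s + 2 * s ^+ 2).
    apply: ler_pM => //; lra.
  have q0' : 0 <= q%:R :> R by rewrite ler0n.
  have e5 : s + 2 * s ^+ 2 <= 1 by rewrite expr2; nra.
  have e4 := ler_wpM2l q0' e5.
  rewrite expr2 in e3 e4 *; lra.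
lra.
Qed.

End S4.


Theorem lemma1 (R : realType) (q : nat) (hq : (1 < q)%N) (c : R) (hc : 0 < c) :
  exists C : R, 0 < C /\
    forall (n : nat) (p : R), 0 < p -> p < 1 -> c <= n%:R * p ->
      binom_expect n p (inv_dev n p q) <=
        C * powR (n%:R * p) (- ((3 * q)%:R / 2)).
Proof.
have q0 : (0 < q)%N by lia.
set D := 2 * q%:R / Num.sqrt c.
set K := expR (c / 2 + 2 * q%:R).
have sc0 : 0 < Num.sqrt c by rewrite sqrtr_gt0.
have D0 : 0 < D by rewrite /D divr_gt0 // mulr_gt0 ?ltr0n.
exists (2 ^+ (q * q) * D ^+ q * (2 * K)); split.
  by rewrite !mulr_gt0 ?exprn_gt0 ?expR_gt0.
move=> n p p0 p1 hmu.
set mu := n%:R * p.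
have mu0 : 0 < mu by apply: lt_le_trans hmu.
have hp : 0 <= p <= 1 by apply/andP; split; lra.
set r := Num.sqrt mu.
have r0 : 0 < r by rewrite sqrtr_gt0.
have rr : r ^+ 2 = mu by rewrite sqr_sqrtr // ltW.
have cr : Num.sqrt c <= r by rewrite ler_sqrt // ltW.
set s := Num.sqrt c / (2 * r).
have s0 : 0 < s by rewrite divr_gt0 // mulr_gt0.
have s1 : s <= 1 / 2.
  by rewrite /s ler_pdivrMr ?mulr_gt0 //; lra.
have mus : mu * s ^+ 2 = c / 4.
  rewrite /s expr_div_n sqr_sqrtr ?(ltW hc) // exprMn rr; field.
  exact: lt0r_neq0.
set h := fun k : nat => `|mu - k%:R| ^+ q.
have h0 : forall k, 0 <= h k by move=> k; rewrite exprn_ge0.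
have st1 : binom_expect n p (inv_dev n p q) <= (mu ^+ q)^-1 * binom_expect n p (@Fj R q h).
  rewrite -E_scale; apply: E_le => // k _.
  rewrite /inv_dev /Fj; case: k => [|k] /=; first by rewrite mulr0.
  have kn : k.+1%:R != 0 :> R by rewrite pnatr_eq0.
  have mun : mu != 0 by apply: lt0r_neq0.
  have -> : k.+1%:R^-1 - mu^-1 = (mu - k.+1%:R) * (k.+1%:R^-1 * mu^-1).
    by field; rewrite mun /= -(natrD R 1 k) add1n pnatr_eq0.


  have hx : (mu - k.+1%:R) ^+ q <= `|mu - k.+1%:R| ^+ q.
    by rewrite -normrX; apply: real_ler_norm; rewrite num_real.
  rewrite exprMn exprMn !exprVn.
  have -> : mu ^- q * (`|mu - k.+1%:R| ^+ q / k.+1%:R ^+ q) =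
     `|mu - k.+1%:R| ^+ q * (k.+1%:R ^- q / mu ^+ q) by ring.
  by apply: ler_wpM2r => //; rewrite mulr_ge0 // invr_ge0 exprn_ge0 // ?ler0n // ltW.
have st2 := @Pj R q n p h h0 p0 p1.
have st3 := @moment R n q p s q0 p0 p1 s0 s1.
have e2 : 2 * mu * s ^+ 2 = c / 2 by rewrite -mulrA mus; lra.
have eK : expR (2 * mu * s ^+ 2 + 2 * q%:R) = K by rewrite e2.
rewrite eK in st3.
have muq : 0 < mu ^+ q by rewrite exprn_gt0.
have E1ge : 0 <= binom_expect n p (@Fj R q h).
  apply: E_ge0 => // k _; rewrite /Fj; case: ifP => // _; rewrite divr_ge0 ?exprn_ge0 //.
have st2' : binom_expect n p (@Fj R q h) <= (mu ^+ q)^-1 * (2 ^+ (q * q) * ((q%:R / s) ^+ q * (2 * K))).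
  rewrite mulrC ler_pdivlMr // mulrC; apply: (le_trans st2); apply: ler_wpM2l; first by rewrite exprn_ge0.
  exact: st3.
apply: (le_trans st1); apply: (le_trans (ler_wpM2l _ st2')); first by rewrite invr_ge0 ltW.
have -> : powR mu (- ((3 * q)%:R / 2)) = (r ^+ (3 * q))^-1.
  rewrite powRN mulrC powRrM powR12_sqrt ?(ltW mu0) // powR_mulrn //; exact: sqrtr_ge0.
have qs : q%:R / s = D * r.
  rewrite /D /s; field; apply/andP; split; apply: lt0r_neq0 => //.
rewrite qs.
clear -rr r0.
move: (2 ^+ (q * q)) (2 * K) => X Y.
rewrite -rr -!exprM exprMn.
have -> : (2 * q)%N = (q + q)%N by lia.
have -> : (3 * q)%N = (q + q + q)%N by lia.
rewrite !exprD.
have rq : r ^+ q != 0 by apply: lt0r_neq0; rewrite exprn_gt0.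
rewrite le_eqVlt; apply/orP; left; apply/eqP; field; exact: rq.
Qed.
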